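(* Let $G$ be a finite nilpotent group, $f\in\mathrm{Aut}(G)$, $Q=\mathcal{Q}(G,f)$, and let $E$ be a finite connected cover of $Q$. Then $\mathrm{rad}(|E|)=\mathrm{rad}(|Q|)$.
   Context: A quandle is a set $Q$ with a binary operation $*$ such that every left translation $L_x:y\mapsto x*y$ is bijective, $x*(y*z)=(x*y)*(x*z)$ and $x*x=x$; $Q$ is connected if $\langle L_x:x\in Q\rangle$ is transitive. $\mathcal{Q}(G,f)$ is $G$ with $x*y=xf(x^{-1}y)$. A cover of $Q$ is a quandle $E$ with a surjective quandle homomorphism $\pi:E\to Q$ such that $\pi(u)=\pi(v)$ implies $L_u=L_v$ in $E$; it is a connected cover if $E$ is connected. For $n\in\mathbb{N}$, $\mathrm{rad}(n)$ is the product of the distinct primes dividing $n$. *)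

(* Defs.v *)
From mathcomp Require Import all_boot all_fingroup all_solvable.
From Stdlib Require Import Relations.
Set Implicit Arguments. Unset Strict Implicit. Unset Printing Implicit Defensive.

(* A quandle structure on a type T given by a binary operation op,
   where op x is the left translation L_x. *)
Definition is_quandle (T : Type) (op : T -> T -> T) : Prop :=
  [/\ (forall x, bijective (op x)),
      (forall x y z, op x (op y z) = op (op x y) (op x z))
    & (forall x, op x x = x)].

(* Connected: the group <L_x : x in T> acts transitively.  Since every L_x is
   a bijection, the orbit of a under this group is the set of elements reachable
   from a by words in the L_x and their inverses, i.e. the equivalence closure
   of the relation u ~ L_x u. *)
Definition quandle_connected (T : Type) (op : T -> T -> T) : Prop :=
  forall a b : T, clos_refl_sym_trans T (fun u v => exists x, op x u = v) a b.

Definition Qop (gT : finGroupType) (f : gT -> gT) (x y : gT) : gT :=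
  (x * f (x^-1 * y))%g.

Definition is_cover (E Q : Type) (opE : E -> E -> E) (opQ : Q -> Q -> Q)
  (pi : E -> Q) : Prop :=
  [/\ is_quandle opE,
      (forall q, exists u, pi u = q),
      (forall u v, pi (opE u v) = opQ (pi u) (pi v))
    & (forall u v, pi u = pi v -> opE u =1 opE v)].

Definition rad (n : nat) : nat := \prod_(p <- primes n) p.

(* Main.v *)
Require Import Defs.
From mathcomp Require Import all_boot all_fingroup all_solvable.
From Stdlib Require Import Relations.
Set Implicit Arguments. Unset Strict Implicit. Unset Printing Implicit Defensive.
Local Open Scope group_scope.

Theorem proposition3p10 (gT : finGroupType) (f : {perm gT})
  (E : finType) (opE : E -> E -> E) (pi : E -> gT) :
  nilpotent [set: gT] ->
  f \in Aut [set: gT] ->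
  is_cover opE (Qop f) pi ->
  quandle_connected opE ->
  rad #|E| = rad #|gT|.
Proof.
move=> _ fA [[Lbij Ldist Lid] piS piM piL] conn.
have fM : {in [set: gT] &, {morph f : x y / (x * y)%g}} := morphicP (Aut_morphic fA).
have f1 : f 1%g = 1%g.
  by apply: (@mulIg _ (f 1%g)); rewrite -fM ?inE // !mulg1 mul1g.
have fV x : f x^-1%g = (f x)^-1%g.
  by apply: (@mulIg _ (f x)); rewrite -fM ?inE // !mulVg.
have fQ a b : f (a^-1 * b)%g = ((f a)^-1 * f b)%g by rewrite fM ?inE // fV.
have Linj u : injective (opE u) := bij_inj (Lbij u).
pose Lq u : {perm E} := perm (Linj u).
have LqE u x : Lq u x = opE u x := permE _ _.
pose Ls := [set Lq u | u : E].
pose X := [set ((Lq v)^-1 * Lq u)%g | u : E, v : E].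
pose N := <<X>>%G.
have AutS : group_set [set h : {perm E} | [forall a, forall b, h (opE a b) == opE (h a) (h b)]].
  apply/group_setP; split.
    by rewrite inE; apply/forallP=> a; apply/forallP=> b; rewrite !perm1.
  move=> h k; rewrite !inE => /forallP Hh /forallP Hk; apply/forallP=> a; apply/forallP=> b.
  by rewrite !permM (eqP (forallP (Hh a) b)) (eqP (forallP (Hk _) _)).
pose AG := Group AutS.
have LqA u : Lq u \in AG.
  by rewrite inE; apply/forallP=> a; apply/forallP=> b; rewrite !LqE Ldist.
have LsA : <<Ls>> \subset AG.
  by rewrite gen_subG; apply/subsetP => _ /imsetP[u _ ->]; exact: LqA.
have XLs : X \subset <<Ls>>.
  by apply/subsetP => _ /imset2P[u v _ _ ->]; rewrite groupM ?groupV // mem_gen // imset_f.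
have NLs : N \subset <<Ls>> by rewrite gen_subG.
have NA : N \subset AG := subset_trans NLs LsA.
have conjL h v : h \in AG -> Lq (h v) = (Lq v ^ h)%g.
  rewrite inE => /forallP Hh; apply/permP => x.
  by rewrite conjgE !permM !LqE (eqP (forallP (Hh v) _)) permKV.
have trans a b : exists2 h, h \in N & h a = b.
  elim: (conn a b) => [x y [z <-] | x | x y _ [h hN <-] | x y z _ [h1 h1N <-] _ [h2 h2N <-]]; clear a b.
  - exists ((Lq x)^-1 * Lq z)%g; first by rewrite mem_gen //; apply/imset2P; exists z x.
    have Hx : (Lq x)^-1%g x = x by apply: (@perm_inj _ (Lq x)); rewrite permKV LqE Lid.
    by rewrite permM Hx LqE.
  - by exists 1%g; rewrite ?group1 ?perm1.
  - by exists h^-1%g; rewrite ?groupV ?permK.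
  - by exists (h1 * h2)%g; rewrite ?groupM ?permM.
have LmS : group_set [set h : {perm E} | [exists g, [forall x, pi (h x) == (g * pi x)%g]]].
  apply/group_setP; split.
    by rewrite inE; apply/existsP; exists 1%g; apply/forallP=> x; rewrite perm1 mul1g.
  move=> h k; rewrite !inE => /existsP[g1 /forallP H1] /existsP[g2 /forallP H2].
  apply/existsP; exists (g2 * g1)%g; apply/forallP => x.
  by rewrite permM (eqP (H2 _)) (eqP (H1 _)) mulgA.
have NLm h : h \in N -> exists g, forall x, pi (h x) = (g * pi x)%g.
  have : N \subset Group LmS.
    rewrite gen_subG; apply/subsetP => _ /imset2P[u v _ _ ->].
    rewrite inE; apply/existsP.
    exists (pi u * (f (pi u))^-1 * f (pi v) * (pi v)^-1)%g; apply/forallP => x.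
    rewrite permM -{2}(permKV (Lq v) x) !LqE !piM /Qop !fQ.
    by rewrite !mulgA mulgKV mulgK.
  move/subsetP => sub /sub; rewrite inE => /existsP[g /forallP H].
  by exists g => x; apply/eqP.
have trans' a b : exists2 h, h \in N & h a = b := trans a b.
have gT0 : 0 < #|gT| by apply/card_gt0P; exists 1.
have E0 : 0 < #|E| by have [u _] := piS 1; apply/card_gt0P; exists u.
pose fib a := [set x | pi x == a].
have fible a b : #|fib a| <= #|fib b|.
  have [ea <-] := piS a; have [eb <-] := piS b.
  have [h hN heab] := trans ea eb; have [g Hg] := NLm h hN.
  rewrite -(card_imset _ (@perm_inj _ h)); apply: subset_leq_card.
  apply/subsetP => y /imsetP[x]; rewrite !inE => /eqP px ->.
  by rewrite Hg px -Hg heab.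
have dvdA : #|gT| %| #|E|.
  have -> : #|E| = \sum_(a : gT) #|fib a|.
    rewrite -sum1_card (partition_big pi predT) //=; apply: eq_bigr => a _.
    by rewrite -sum1_card; apply: eq_bigl => x; rewrite inE.
  rewrite (eq_bigr (fun=> #|fib 1|)) ?sum_nat_const ?cardT ?dvdn_mulr //.
  by move=> a _; apply/eqP; rewrite eqn_leq !fible.
have dvdB p : prime p -> p %| #|E| -> p %| #|gT|.
  move=> pp pE; apply: contraT => npG.
  have [P sylP] := Sylow_exists p N; have [sPN pP _] := and3P sylP.
  have PK h : h \in P -> forall x, pi (h x) = pi x.
    move=> hP x; have hN : h \in N := subsetP sPN h hP.
    have [g Hg] := NLm h hN.
    have Hk k : forall y, pi ((h ^+ k) y) = g ^+ k * pi y.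
      elim: k => [|k IH] y; first by rewrite !expg0 perm1 mul1g.
      by rewrite expgS permM IH Hg mulgA -expgSr.
    have g1 : g ^+ #[h] = 1.
      by apply: (@mulIg _ (pi x)); rewrite -Hk expg_order perm1 mul1g.
    have o1 : #[g] = 1%N.
      apply: (@pnat_1 p).
        have d1 : #[g] %| #[h] by rewrite order_dvdn g1.
        apply: pnat_dvd d1 _.
        exact: pnat_dvd (order_dvdG hP) pP.
      apply: pnat_dvd (order_dvdG (in_setT g)) _.
      by rewrite cardsT p'natE.
    by move/eqP: o1; rewrite order_eq1 => /eqP ge; rewrite Hg ge mul1g.
  have PC h u : h \in P -> Lq u ^ h = Lq u.
    move=> hP; rewrite -conjL; last exact: subsetP NA h (subsetP sPN h hP).
    by apply/permP => y; rewrite !LqE; apply: piL; rewrite PK.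
  have PCL : P \subset 'C(<<Ls>>).
    rewrite cent_gen; apply/subsetP => h hP; apply/centP => _ /imsetP[u _ ->].
    apply: commute_sym; apply/commgP; rewrite -conjg_fix; apply/eqP; exact: PC.
  have PCN : P \subset 'C(N) := subset_trans PCL (centS NLs).
  have nPN : P <| N.
    by rewrite /normal sPN /= (subset_trans _ (cent_sub P)) // centsC.
  have /splitsP[Y /complP[tiPY defN]] := SchurZassenhaus_split (pHall_Hall sylP) nPN.
  have sYN : Y \subset N by rewrite -defN mulG_subr.
  have p'Y : p^'.-group Y.
    have [_ _ p'i] := and3P sylP.
    have : #|Y| = #|N : P|.
      apply/eqP; rewrite -(eqn_pmul2l (cardG_gt0 P)) Lagrange // -defN TI_cardMg //.
    by rewrite /pgroup => ->.
  have nYN : Y <| N.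
    rewrite /normal sYN /= -defN mul_subG ?normG //.
    exact: subset_trans (subset_trans PCN (centS sYN)) (cent_sub Y).
  pose R := 'O_p^'(N)%G.
  have sYR : Y \subset R by apply: pcore_max.
  have sNPR : N \subset P * R by rewrite -defN mulgS.
  have nXA a : a \in AG -> a \in 'N(X).
    move=> aA; rewrite inE; apply/subsetP => y; rewrite mem_conjg => /imset2P[u v _ _ yE].
    rewrite -(conjgKV a y) yE conjMg conjVg -!conjL //.
    by apply/imset2P; exists (a u) (a v).
  have nLN : Ls \subset 'N(N).
    apply: norms_gen; apply/subsetP => _ /imsetP[u _ ->]; exact: nXA.
  have nLR : Ls \subset 'N(R) := char_norm_trans (pcore_char _ _) nLN.
  have sXR : X \subset R.
    apply/subsetP => _ /imset2P[u v _ _ ->].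
    have [h hN hvu] := trans v u.
    have /mulsgP[a b aP bR hab] := subsetP sNPR h hN.
    have hA : h \in AG := subsetP NA h hN.
    rewrite -hvu conjL // hab conjgM PC // conjgE !mulgA.
    apply: groupM => //; rewrite -mulgA -conjgE memJ_norm ?groupV //.
    by apply: (subsetP nLR); apply: imset_f.
  have p'N : p^'.-group N.
    apply: pgroupS (pcore_pgroup _ N); rewrite gen_subG; exact: sXR.
  have dEN : #|E| %| #|N|.
    have [e _] := piS 1.
    have oT : orbit 'P N e = [set: E].
      apply/eqP; rewrite eqEsubset subsetT /=.
      apply/subsetP => y _; apply/orbitP; have [h hN he] := trans e y.
      by exists h.
    by rewrite -cardsT -oT card_orbit dvdn_indexg.
  by move: (pnat_dvd dEN p'N); rewrite p'natE // pE.
rewrite /rad; suff -> : primes #|E| = primes #|gT| by [].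
apply/eq_primes => p; rewrite !mem_primes E0 gT0 /=.
apply/andP/andP => [] [pp pd]; split => //; first exact: dvdB.
exact: dvdn_trans pd dvdA.
Qed.
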